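(* Let $G=(V,E)$ be a fixed graph, $v,u$ two non-adjacent vertices, and $k$ an integer. Assume that for some $\alpha\in[0,1]$, for all $c,q\in[k]$ with $c\ne q$, the set $\Omega(c,c)$ is $\alpha$-isomorphic to $\Omega(q,c)$ with $\alpha$-function $H(\cdot,q)$. Let $\nu$ be the uniform distribution over the good $k$-colourings of $G$, and let $\nu'$ be the distribution of the output of STEP when its input colouring is uniformly distributed over the $k$-colourings of $G$. Then $\|\nu-\nu'\|\le\alpha$.
   Context: $[k]=\{1,\dots,k\}$; $\Omega$ is the set of proper $k$-colourings of $G$ (assumed non-empty), $\sigma_w$ the colour of $w$, and $\Omega(c,q)$ the set of $\sigma\in\Omega$ with $\sigma_v=c,\sigma_u=q$. A colouring $\sigma$ is good if $\sigma_v\ne\sigma_u$ and bad otherwise. $\|\nu_a-\nu_b\|=\max_{A\subseteq[k]^V}|\nu_a(A)-\nu_b(A)|$. Disagreement graph: for $\sigma\in\Omega$ and $q\ne\sigma_v$, $Q_{\sigma_v,q}$ is the subgraph induced by all vertices reachable from $v$ by a path in $G$ all of whose vertices have colour in $\{\sigma_v,q\}$. The $q$-switching $H(\sigma,q)$ swaps the colours $\sigma_v$ and $q$ on the vertices of $Q_{\sigma_v,q}$, leaving other vertices unchanged. STEP: on input $X\in\Omega$, if $X$ is good output $X$; if $X$ is bad choose $q$ uniformly at random from $[k]\setminus\{X(v)\}$ and output $H(X,q)$. $\alpha$-isomorphism: $\Omega_1$ is $\alpha$-isomorphic to $\Omega_2$ if there exist $\Omega_1'\subseteq\Omega_1$,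 $\Omega_2'\subseteq\Omega_2$ with $|\Omega_i'|\ge(1-\alpha)|\Omega_i|$ ($i=1,2$) and a bijection $h:\Omega_1'\to\Omega_2'$; a map $F:\Omega_1\to[k]^V$ is an $\alpha$-function (for such a pair and bijection) if $F(\sigma)=h(\sigma)$ for all $\sigma\in\Omega_1'$. *)

(* Defs.v *)
From mathcomp Require Import all_boot all_order all_algebra.
Set Implicit Arguments. Unset Strict Implicit. Unset Printing Implicit Defensive.
Import Order.TTheory GRing.Theory Num.Theory.
Local Open Scope ring_scope.

(* The graph G = (V, E) is a symmetric irreflexive relation e on a finType V.
   Colours [k] = {1..k} are represented by 'I_k = {0..k-1}.
   A colouring is an element of [k]^V, i.e. {ffun V -> 'I_k}. *)
Definition colouring (V : finType) (k : nat) := {ffun V -> 'I_k}.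

Section Defs.
Variables (V : finType) (e : rel V) (k : nat) (v u : V).

Definition proper (s : colouring V k) : bool :=
  [forall x, forall y, e x y ==> (s x != s y)].

Definition Omega : {set colouring V k} := [set s | proper s].

Definition Omega_cq (c q : 'I_k) : {set colouring V k} :=
  [set s in Omega | (s v == c) && (s u == q)].

Definition good (s : colouring V k) : bool := s v != s u.

Definition Good : {set colouring V k} := [set s in Omega | good s].

Definition Qset (s : colouring V k) (q : 'I_k) : {set V} :=
  [set w | connect (fun x y => [&& e x y, s x \in [:: s v; q] & s y \in [:: s v; q]]) v w].

Definition Hswitch (s : colouring V k) (q : 'I_k) : colouring V k :=
  [ffun w => if w \in Qset s q then
               (if s w == s v then q else if s w == q then s v else s w)
             else s w].

Definition alpha_iso (R : numDomainType) (alpha : R)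
    (O1 O2 : {set colouring V k}) (F : colouring V k -> colouring V k) : Prop :=
  exists (O1' O2' : {set colouring V k}) (h : colouring V k -> colouring V k),
    [/\ O1' \subset O1, O2' \subset O2,
        (1 - alpha) * #|O1|%:R <= #|O1'|%:R,
        (1 - alpha) * #|O2|%:R <= #|O2'|%:R &
        [/\ {in O1', forall x, h x \in O2'},
            {in O1' &, injective h},
            {in O2', forall y, exists2 x, x \in O1' & h x = y} &
            {in O1', forall x, F x = h x}]].

Definition nu (R : fieldType) (A : {set colouring V k}) : R :=
  #|A :&: Good|%:R / #|Good|%:R.

(* nu': distribution of STEP(X) for X uniform over Omega.  If X is good the
   output is X; otherwise q is uniform over [k] \ {X(v)} and output H(X,q). *)
Definition nu' (R : fieldType) (A : {set colouring V k}) : R :=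
  (#|Omega|%:R)^-1 *
  \sum_(s in Omega)
     (if good s then (s \in A)%:R
      else ((k.-1)%:R)^-1 * \sum_(q : 'I_k | q != s v) (Hswitch s q \in A)%:R).

End Defs.

(* Main.v *)
Require Import Defs.
From mathcomp Require Import all_boot all_order all_algebra.
From mathcomp Require Import zify ring lra.
Import Order.TTheory GRing.Theory Num.Theory.
Local Open Scope ring_scope.

Lemma sum_ind (R : numDomainType) (T : finType) (X : {set T}) (P : pred T) :
  \sum_(s in X) (P s)%:R = #|[set s in X | P s]|%:R :> R.
Proof.
rewrite -sum1_card natr_sum [LHS]big_mkcond [RHS]big_mkcond /=.
apply: eq_bigr => s _; rewrite !inE; by case: (s \in X); case: (P s).
Qed.

Lemma good_part V e k v u (X : {set colouring V k}) :
  (\sum_(c : 'I_k) \sum_(q | q != c) #|X :&: Omega_cq e v u q c|)%N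
    = #|X :&: Good e k v u|.
Proof.
rewrite -[in RHS]sum1_card [RHS](partition_big (fun s : colouring V k => s u) predT) //=.
apply: eq_bigr => c _.
rewrite [RHS](partition_big (fun s : colouring V k => s v) (fun q => q != c)).
  apply: eq_bigr => q Hqc; rewrite -sum1_card; apply: eq_bigl => s.
  rewrite /Good /Omega_cq /good !inE.
  case: (eqVneq (s v) q) => [->|]; case: (eqVneq (s u) c) => [->|];
    rewrite ?andbF ?andbT ?eqxx ?Hqc /=; try done. all: try by rewrite andbT.
move=> s; rewrite /Good /good !inE => /andP[/andP[_ /andP[_ Hg]] /eqP <-] //.
Qed.

Lemma bad_part (R : numDomainType) V e k v u (F : colouring V k -> R) :
  \sum_(s in Omega e k | ~~ good v u s) F s
    = \sum_(c : 'I_k) \sum_(s in Omega_cq e v u c c) F s.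
Proof.
rewrite [LHS](partition_big (fun s : colouring V k => s v) predT) //=.
apply: eq_bigr => c _; apply: eq_bigl => s.
rewrite /Omega_cq /good !inE negbK.
have E : (s v == s u) && (s v == c) = (s v == c) && (s u == c).
  by case: (eqVneq (s v) c) => [->|_]; rewrite ?andbF ?andbT // eq_sym.
by rewrite -andbA E.
Qed.

Lemma iso_facts (R : realFieldType) (alpha : R) V e k v u (c q : 'I_k)
   (A : {set colouring V k}) :
  alpha_iso alpha (Omega_cq e v u c c) (Omega_cq e v u q c)
            (fun s => Hswitch e v s q) ->
  (1 - alpha) * #|Omega_cq e v u c c|%:R <= #|Omega_cq e v u q c|%:R /\
  #|A :&: Omega_cq e v u q c|%:R - alpha * #|Omega_cq e v u q c|%:R
     <= \sum_(s in Omega_cq e v u c c) (Hswitch e v s q \in A)%:R :> R.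
Proof.
case=> O1 [O2 [h [s1 s2 c1 c2 [hmap hinj hsurj hF]]]].
have im : h @: O1 = O2.
  apply/setP => y; apply/imsetP/idP => [[x xO ->]|yO]; first exact: hmap.
  by have [x xO <-] := hsurj y yO; exists x.
have cardeq : #|O1| = #|O2| by rewrite -im card_in_imset.
split.
  by apply: le_trans c1 _; rewrite cardeq ler_nat subset_leq_card.
set X := [set s in O1 | h s \in A].
have imX : h @: X = O2 :&: A.
  apply/setP => y; apply/imsetP/idP => [[x]|].
    by rewrite inE => /andP[xO xA] ->; rewrite inE xA hmap.
  rewrite inE => /andP[yO yA]; have [x xO hx] := hsurj y yO.
  by exists x => //; rewrite inE xO hx.
have cX : #|X| = #|O2 :&: A|.
  rewrite -imX card_in_imset // => x y; rewrite !inE => /andP[? _] /andP[? _].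
  exact: hinj.
rewrite sum_ind.
have le1 : (#|X| <= #|[set s in Omega_cq e v u c c | Hswitch e v s q \in A]|)%N.
  apply: subset_leq_card; apply/subsetP => x; rewrite inE => /andP[xO xA].
  by rewrite inE (subsetP s1 x xO) /= (hF x xO).
have le2 : (#|A :&: Omega_cq e v u q c| <= #|O2 :&: A| + #|Omega_cq e v u q c :\: O2|)%N.
  rewrite -(cardsID O2 (A :&: Omega_cq e v u q c)) leq_add //.
    apply: subset_leq_card; apply/subsetP => x.
    by rewrite !in_setI => /andP[/andP[xA _] xO]; rewrite xO xA.
  apply: subset_leq_card; apply/subsetP => x.
  by rewrite !in_setD !in_setI => /andP[nO /andP[_ xO']]; rewrite nO xO'.
have e3 : (#|Omega_cq e v u q c :\: O2| + #|O2| = #|Omega_cq e v u q c|)%N.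
  by rewrite -(cardsID O2 (Omega_cq e v u q c)) (setIidPr s2) addnC.
move: le1 le2 e3; rewrite cX -(ler_nat R) -(ler_nat R) => le1 le2 /(congr1 (fun n => n%:R : R)).
rewrite !natrD in le2 * => e3.
lra.
Qed.

Lemma arith (R : realFieldType) (a B G S K alpha : R) :
  0 <= alpha -> alpha <= 1 -> 1 <= K -> 0 <= B -> 0 < G -> 0 <= a -> a <= G -> 0 <= S ->
  a - alpha * G <= K * S -> K * (1 - alpha) * B <= G ->
  a * B - G * S <= alpha * G * (G + B).
Proof.
move=> a0 a1 K1 B0 G0 a0' aG S0 KS C3.
case: (lerP a (alpha * G)) => ha.
  have h1 : a * B <= alpha * G * B by apply: ler_wpM2r.
  have h2 : 0 <= G * S by apply: mulr_ge0 => //; apply: ltW.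
  have h3 : 0 <= alpha * G * G by apply: mulr_ge0; [apply: mulr_ge0 => //|]; apply: ltW.
  lra.
set d := a - alpha * G.
have d0 : 0 <= d by rewrite /d subr_ge0 ltW.
have dle : d <= (1 - alpha) * G by rewrite /d; lra.
have BaG : B * (1 - alpha) <= G.
  apply: le_trans C3.
  have h : 0 <= (1 - alpha) * B by apply: mulr_ge0 => //; lra.
  have e : K * (1 - alpha) * B = K * ((1 - alpha) * B) by ring.
  rewrite e mulrC -{1}(mul1r ((1 - alpha) * B)); exact: ler_wpM2r.
have Bd : B * d <= G * G.
  apply: (le_trans (y := B * ((1 - alpha) * G))); first by apply: ler_wpM2l.
  rewrite mulrA; apply: ler_wpM2r => //; exact: ltW.
have KBd : K * B * d <= G * d + K * alpha * (G * G).
  have e1 : K * B * d = K * (1 - alpha) * B * d + K * alpha * (B * d) by ring.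
  rewrite e1; apply: lerD; first by apply: ler_wpM2r.
  apply: ler_wpM2l => //; apply: mulr_ge0; lra.
have GKS : G * d <= G * (K * S) by apply: ler_wpM2l => //; exact: ltW.
have K0 : 0 < K by lra.
suff : K * (a * B - G * S) <= K * (alpha * G * (G + B)) by rewrite ler_pM2l.
have e2 : K * (a * B - G * S) = K * B * d + K * alpha * G * B - G * (K * S) by rewrite /d; ring.
have e3 : K * (alpha * G * (G + B)) = K * alpha * (G * G) + K * alpha * G * B by ring.
rewrite e2 e3; lra.
Qed.

Lemma ord_neq_k2 k (x y : 'I_k) : x != y -> (1 < k)%N.
Proof.
rewrite ltnNge; apply: contra => kle; apply/eqP; apply: ord_inj.
have := ltn_ord x; have := ltn_ord y; lia.
Qed.

Lemma lower (R : realFieldType) (V : finType) (e : rel V) (k : nat)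
    (v u : V) (alpha : R) :
  Good e k v u != set0 ->
  0 <= alpha <= 1 ->
  (forall c q : 'I_k, c != q ->
     alpha_iso alpha (Omega_cq e v u c c) (Omega_cq e v u q c)
               (fun s => Hswitch e v s q)) ->
  forall A : {set colouring V k},
    nu e v u R A - nu' e v u R A <= alpha.
Proof.
move=> HG /andP[a0 a1] Hiso A.
have k2 : (1 < k)%N.
  case/set0Pn: HG => s; rewrite inE => /andP[_ g]; move: g; rewrite /good.
  exact: ord_neq_k2.
set K := (k.-1)%:R : R.
have K1 : 1 <= K by rewrite /K ler1n; lia.
set N := #|Omega e k|%:R : R.
set G := #|Good e k v u|%:R : R.
set a := #|A :&: Good e k v u|%:R : R.
set B := \sum_(c : 'I_k) #|Omega_cq e v u c c|%:R : R.
have sumC1 : forall (c : 'I_k) (x : R), \sum_(q | q != c) x = x * K.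
  move=> c x; rewrite (eq_bigl (fun q => q \in predC1 c)) //.
  by rewrite sumr_const cardC1 card_ord mulr_natr.
have eG : G = \sum_(c : 'I_k) \sum_(q | q != c) #|Omega_cq e v u q c|%:R.
  rewrite /G -[Good e k v u]setTI -good_part natr_sum.
  by apply: eq_bigr => c _; rewrite natr_sum; apply: eq_bigr => q _; rewrite setTI.
have eA : a = \sum_(c : 'I_k) \sum_(q | q != c) #|A :&: Omega_cq e v u q c|%:R.
  rewrite /a -good_part natr_sum.
  by apply: eq_bigr => c _; rewrite natr_sum.
have eN : N = G + B.
  rewrite /N -sum1_card natr_sum (bigID (good v u)) /=; congr (_ + _).
    rewrite /G -sum1_card natr_sum; apply: eq_bigl => s; by rewrite /Good !inE.
  rewrite bad_part; apply: eq_bigr => c _; by rewrite -sum1_card natr_sum.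
rewrite /nu /nu' -/N -/G -/a -/K (bigID (good v u)) /=.
have -> : \sum_(i in Omega e k | good v u i) (if good v u i then (i \in A)%:R else K^-1 * \sum_(q | q != i v) (Hswitch e v i q \in A)%:R) = a.
  rewrite (eq_bigr (fun i => (i \in A)%:R)); last by move=> i /andP[_ ->].
  rewrite (eq_bigl (fun i => i \in Good e k v u)); last by move=> i; rewrite /Good !inE.
  rewrite sum_ind /a; congr (_%:R); apply: eq_card => i; by rewrite !inE andbC.
set S := \sum_(i in Omega e k | ~~ good v u i) _.
have S0 : 0 <= S.
  apply: sumr_ge0 => i /andP[_ ng]; rewrite (negbTE ng) mulr_ge0 ?invr_ge0 ?ler0n //.
  by apply: sumr_ge0 => q _; exact: ler0n.
have K0 : K != 0 by rewrite gt_eqF //; lra.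
have KS : a - alpha * G <= K * S.
  rewrite /S bad_part mulr_sumr eA eG mulr_sumr -sumrB.
  apply: ler_sum => c _.
  rewrite mulr_sumr -sumrB.
  have -> : K * \sum_(s in Omega_cq e v u c c) (if good v u s then (s \in A)%:R else K^-1 * \sum_(q | q != s v) (Hswitch e v s q \in A)%:R) = \sum_(q | q != c) \sum_(s in Omega_cq e v u c c) (Hswitch e v s q \in A)%:R.
    rewrite [RHS]exchange_big mulr_sumr; apply: eq_bigr => s.
    rewrite inE => /andP[_ /andP[/eqP sv /eqP su]].
    by rewrite /good sv su eqxx /= mulrA mulfV ?mul1r.
  apply: ler_sum => q Hq.
  have Hcq : c != q by rewrite eq_sym.
  exact: (@iso_facts R alpha V e k v u c q A (Hiso c q Hcq)).2.
have C3 : K * (1 - alpha) * B <= G.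
  rewrite eG /B mulr_sumr; apply: ler_sum => c _.
  have e1 : K * ((1 - alpha) * #|Omega_cq e v u c c|%:R) = \sum_(q | q != c) ((1 - alpha) * #|Omega_cq e v u c c|%:R).
    by rewrite sumC1 mulrC.
  rewrite -mulrA e1; apply: ler_sum => q Hq.
  have Hcq : c != q by rewrite eq_sym.
  exact: (@iso_facts R alpha V e k v u c q A (Hiso c q Hcq)).1.
have B0 : 0 <= B by apply: sumr_ge0 => c _; exact: ler0n.
have aG : a <= G by rewrite ler_nat subset_leq_card // subsetIr.
have G0 : 0 < G by rewrite ltr0n card_gt0.
have a0' : 0 <= a by exact: ler0n.
have P := @arith R a B G S K alpha a0 a1 K1 B0 G0 a0' aG S0 KS C3.
rewrite eN.
have GB : G + B != 0 by rewrite gt_eqF // ltr_wpDr.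
have -> : a / G - (G + B)^-1 * (a + S) = (a * B - G * S) / (G * (G + B)).
  by field; rewrite GB gt_eqF.
rewrite ler_pdivrMr ?mulr_gt0 ?ltr_wpDr //.
by rewrite mulrA.
Qed.

Lemma nu_compl (R : realFieldType) (V : finType) (e : rel V) (k : nat)
    (v u : V) (A : {set colouring V k}) :
  Good e k v u != set0 ->
  nu e v u R (~: A) = 1 - nu e v u R A.
Proof.
move=> HG; have G0 : (#|Good e k v u|%:R : R) != 0 by rewrite pnatr_eq0 -lt0n card_gt0.
rewrite /nu setIC -setDE.
have h := cardsID A (Good e k v u).
move: h => /(congr1 (fun n => n%:R : R)); rewrite natrD setIC => h.
rewrite -h; field; by rewrite h.
Qed.

Lemma nu'_compl (R : realFieldType) (V : finType) (e : rel V) (k : nat)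
    (v u : V) (A : {set colouring V k}) :
  Omega e k != set0 -> Good e k v u != set0 ->
  nu' e v u R (~: A) = 1 - nu' e v u R A.
Proof.
move=> HO HG.
have k2 : (1 < k)%N.
  case/set0Pn: HG => s; rewrite inE => /andP[_ g]; exact: ord_neq_k2 g.
have K0 : ((k.-1)%:R : R) != 0 by rewrite pnatr_eq0; lia.
have N0 : (#|Omega e k|%:R : R) != 0 by rewrite pnatr_eq0 -lt0n card_gt0.
rewrite /nu'.
have -> : \sum_(s in Omega e k) (if good v u s then (s \in ~: A)%:R
      else ((k.-1)%:R)^-1 * \sum_(q | q != s v) (Hswitch e v s q \in ~: A)%:R)
  = \sum_(s in Omega e k) (1 - (if good v u s then (s \in A)%:R
      else ((k.-1)%:R)^-1 * \sum_(q | q != s v) (Hswitch e v s q \in A)%:R)) :> R.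
  apply: eq_bigr => s _; case: (good v u s).
    by rewrite inE; case: (s \in A); rewrite ?subr0 ?subrr.
  rewrite (eq_bigr (fun q => 1 - (Hswitch e v s q \in A)%:R)); last first.
    by move=> q _; rewrite inE; case: (_ \in A); rewrite ?subr0 ?subrr.
  rewrite sumrB (eq_bigl (fun q => q \in predC1 (s v))) // sumr_const cardC1 card_ord.
  rewrite (eq_bigl (fun q => q \in predC1 (s v)) (fun q => (Hswitch e v s q \in A)%:R)) //.
  by rewrite mulrBr mulVf.
rewrite sumrB sumr_const; field; exact: N0.
Qed.

Theorem theorem3 (R : realFieldType) (V : finType) (e : rel V) (k : nat)
    (v u : V) (alpha : R) :
  symmetric e -> irreflexive e ->
  v != u -> ~~ e v u ->
  Omega e k != set0 ->
  Good e k v u != set0 ->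
  0 <= alpha <= 1 ->
  (forall c q : 'I_k, c != q ->
     alpha_iso alpha (Omega_cq e v u c c) (Omega_cq e v u q c)
               (fun s => Hswitch e v s q)) ->
  forall A : {set colouring V k},
    `| nu e v u R A - nu' e v u R A | <= alpha.
Proof.
move=> _ _ _ _ HO HG Ha Hiso A.
rewrite ler_norml; apply/andP; split; last exact: (@lower R V e k v u alpha HG Ha Hiso A).
have := @lower R V e k v u alpha HG Ha Hiso (~: A).
rewrite nu_compl // nu'_compl //; lra.
Qed.
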